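(* Let $s$ and $K$ be probability densities with respect to Lebesgue measure on $\mathbb{R}$, and for $w>0$ set $K_w(y)=w^{-1}K(w^{-1}y)$. Let $g=\sqrt{s}$ and assume that $\omega_2(g,\eta)\le\phi(\eta)$ for all $\eta\ge0$, where $\omega_2(g,\eta)=\sup_{|z|\le\eta}\|g(\cdot+z)-g\|$ and $\phi$ is a nondecreasing concave function on $[0,\infty)$ with $\phi(0)=0$. Then for every $w>0$, \[ \left\|\sqrt{s}-\sqrt{K_w\ast s}\right\|^2\le2\left[\int_{\mathbb{R}}(1\vee x^2)K(x)\,dx\right]\phi^2(w). \]
   Context: $\|\cdot\|$ is the $\mathbb{L}_2$-norm with respect to Lebesgue measure, and $\ast$ denotes convolution. *)

(* Defs.v *)
From HB Require Import structures.
From mathcomp Require Import all_boot all_order all_algebra.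
From mathcomp Require Import all_classical all_reals all_analysis.
Set Implicit Arguments. Unset Strict Implicit. Unset Printing Implicit Defensive.
Import Order.TTheory GRing.Theory Num.Theory.
Import numFieldNormedType.Exports.
Local Open Scope classical_set_scope.
Local Open Scope ring_scope.

Notation leb := (@lebesgue_measure _).

Definition prob_density (R : realType) (f : R -> R) : Prop :=
  [/\ measurable_fun [set: R] f, (forall x, 0 <= f x)
    & (\int[@lebesgue_measure R]_x (f x)%:E = 1)%E].

Definition L2norm (R : realType) (f : R -> R) : \bar R :=
  Lnorm (@lebesgue_measure R) 2%:E (fun x => (f x)%:E).

Definition Kw (R : realType) (K : R -> R) (w : R) : R -> R :=
  fun y => w^-1 * K (w^-1 * y).

(* convolution (f * h)(x) = \int f(x - y) h(y) dy (real value; where the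
   integral is infinite -- a Lebesgue-null set for densities -- we take 0) *)
Definition convol (R : realType) (f h : R -> R) : R -> R :=
  fun x => \int[@lebesgue_measure R]_y (f (x - y) * h y).

Definition omega2 (R : realType) (g : R -> R) (eta : R) : \bar R :=
  ereal_sup [set L2norm (fun x => g (x + z) - g x) | z in [set z : R | `|z| <= eta]].

Definition nondecreasing_on_pos (R : realType) (phi : R -> R) : Prop :=
  forall x y : R, 0 <= x -> x <= y -> phi x <= phi y.

Definition concave_on_pos (R : realType) (phi : R -> R) : Prop :=
  forall (x y t : R), 0 <= x -> 0 <= y -> 0 <= t -> t <= 1 ->
    (1 - t) * phi x + t * phi y <= phi ((1 - t) * x + t * y).

(* Main.v *)
Require Import Defs.
From HB Require Import structures.
From mathcomp Require Import all_boot all_order all_algebra.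
From mathcomp Require Import all_classical all_reals all_analysis.
From mathcomp Require Import ring lra.
From mathcomp Require Import measurable_realfun.
Import Order.TTheory GRing.Theory Num.Theory.
Import numFieldNormedType.Exports.
Local Open Scope classical_set_scope.
Local Open Scope ring_scope.

Ltac mfun := repeat first [ assumption | exact: measurable_cst
  | apply: measurable_funM | apply: measurable_funB | apply: measurable_funD
  | apply: measurable_funX | apply: measurable_maxr | exact: measurable_id ].
Ltac pos := repeat first [ assumption | done | apply: addr_ge0 | apply: mulr_ge0
  | apply: sqr_ge0 | match goal with H : forall _, 0 <= _ |- _ => apply: H end ].
Ltac side := first [ solve [mfun] | solve [move=> ?; pos] | solve [pos] ].

Section S.
Context (R : realType).
Local Notation leb := (@lebesgue_measure R).

Lemma mphi (a b : R) : measurable_fun [set: R] (fun u : R => a * u + b).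
Proof.
by apply: measurable_funD => //; apply: measurable_funM.
Qed.

Lemma leb_affine_ocitv (a b : R) : a != 0 -> forall X, ocitv X ->
  (leb X = `|a|%:E * leb ((fun u : R => (a * u + b)%R) @^-1` X))%E.
Proof.
move=> a0 X [[x1 x2] _ <-] /=.
have [ap|an] := ltrP 0 a.
  have -> : (fun u => a * u + b) @^-1` `]x1, x2] = `](x1 - b) / a, (x2 - b) / a]%classic.
    apply/seteqP; split => u /=; rewrite !in_itv /=.
      by move=> /andP[h1 h2]; rewrite ltr_pdivrMr // ler_pdivlMr // ; apply/andP; split; lra.
    by rewrite ltr_pdivrMr // ler_pdivlMr // => /andP[h1 h2]; apply/andP; split; lra.
  rewrite !lebesgue_measure_itv /= !lte_fin ltr_pM2r ?invr_gt0 //.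
  rewrite ltrBlDr subrK; case: ifPn => _; last by rewrite mule0.
  rewrite -EFinM; congr EFin; rewrite gtr0_norm //. field; lra.
have an' : a < 0 by rewrite lt_neqAle a0 an.
have -> : (fun u => a * u + b) @^-1` `]x1, x2] = `[(x2 - b) / a, (x1 - b) / a[%classic.
  apply/seteqP; split => u /=; rewrite !in_itv /=.
    by move=> /andP[h1 h2]; rewrite ltr_ndivlMr // ler_ndivrMr // ; apply/andP; split; lra.
  by rewrite ltr_ndivlMr // ler_ndivrMr // => /andP[h1 h2]; apply/andP; split; lra.
rewrite !lebesgue_measure_itv /= !lte_fin ltr_nM2r ?invr_lt0 //.
rewrite ltrBlDr subrK; case: ifPn => _; last by rewrite mule0.
rewrite -EFinM; congr EFin; rewrite ltr0_norm //. field; lra.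
Qed.

Lemma leb_affine (a b : R) : a != 0 -> forall X, measurable X ->
  (leb X = `|a|%:E * leb ((fun u : R => (a * u + b)%R) @^-1` X))%E.
Proof.
move=> a0 X mX.
have := (@lebesgue_measure_unique R (mscale (NngNum (normr_ge0 a)) (pushforward leb ((fun u : R => a * u + b) : R -> measurableTypeR R)))).
move=> /(_ (mphi a b)) H.
rewrite (H _ X mX) // => Y /(@leb_affine_ocitv a b a0).

by [].
Qed.

Lemma integral_affine (a b : R) (f : R -> \bar R) : a != 0 ->
  measurable_fun setT f -> (forall x, (0 <= f x)%E) ->
  (\int[leb]_x f x = `|a|%:E * \int[leb]_u f (a * u + b)%R)%E.
Proof.
move=> a0 mf f0.
have := @eq_measure_integral _ _ _ setT (mscale (NngNum (normr_ge0 a)) (pushforward leb ((fun u : R => a * u + b) : R -> measurableTypeR R))) leb f.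
move=> /(_ (mphi a b)) ->; last first.
  by move=> A mA _; exact: (@leb_affine a b a0).
have := @ge0_integral_mscale _ _ _ (pushforward leb ((fun u : R => a * u + b) : R -> measurableTypeR R)) setT measurableT (NngNum (normr_ge0 a)) f.
move=> /(_ (mphi a b)) -> //=; congr (_ * _)%E.
rewrite ge0_integral_pushforward //.
exact: mphi.
Qed.
End S.

Section T3.
Context (R : realType).
Local Notation leb := (@lebesgue_measure R).

Lemma L2norm_sqr (F : R -> R) :
  (L2norm F ^+ 2 = \int[leb]_x ((F x) ^+ 2)%:E)%E.
Proof.
rewrite /L2norm unlock /Lnorm.
under eq_integral do rewrite abse_EFin poweR_EFin powR_mulrn // real_normK ?num_real //.
have : (0 <= \int[leb]_x ((F x) ^+ 2)%:E)%E by apply: integral_ge0 => x _; rewrite lee_fin sqr_ge0.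
case: (\int[leb]_x _)%E => [r| |] //= r0.
  rewrite lee_fin in r0.
  by rewrite -EFinM powR12_sqrt // -expr2 sqr_sqrtr.
by rewrite invr_eq0 pnatr_eq0.
Qed.

Lemma phi_bound (phi : R -> R) (w u : R) : 0 < w ->
  nondecreasing_on_pos phi -> concave_on_pos phi -> phi 0 = 0 ->
  0 <= phi `|u| -> 0 <= phi w ->
  phi `|u| ^+ 2 <= phi w ^+ 2 * Num.max 1 ((w^-1 * u) ^+ 2).
Proof.
move=> w0 ndphi cphi phi0 pu pw.
have [uw|wu] := lerP `|u| w.
  rewrite -[X in X <= _]mulr1; apply: ler_pM => //.
  - by rewrite sqr_ge0.
  - apply: lerXn2r; rewrite ?nnegrE //. exact: ndphi.
  - by rewrite le_max lexx.
have u0 : 0 < `|u| by exact: lt_trans wu.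
have t1 : w / `|u| <= 1 by rewrite ler_pdivrMr // mul1r ltW.
have H := cphi 0 `|u| (w / `|u|) (lexx 0) (normr_ge0 u) (divr_ge0 (ltW w0) (normr_ge0 u)) t1.
rewrite phi0 !(mulr0, add0r) divfK ?gt_eqF // in H.
have H2 : phi `|u| <= (w^-1 * `|u|) * phi w.
  rewrite -(ler_pM2l (_ : 0 < w / `|u|)) ?divr_gt0 //.
  apply: (le_trans H); rewrite mulrA -[X in X <= _]mul1r; apply: ler_wpM2r => //.
  by rewrite mulrCA !mulrA mulVf ?gt_eqF // mul1r mulVf ?gt_eqF.
have H3 : 0 <= w^-1 * `|u| * phi w.
  by apply: mulr_ge0 => //; apply: mulr_ge0 => //; rewrite invr_ge0 ltW.
apply: (le_trans (lerXn2r _ _ _ H2)); rewrite ?nnegrE //.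
rewrite exprMn mulrC; apply: ler_wpM2l; first by rewrite sqr_ge0.
by rewrite le_max !exprMn real_normK ?num_real // lexx orbT.
Qed.

End T3.

Section T4.
Context (R : realType).
Local Notation leb := (@lebesgue_measure R).

Lemma intD (f h : R -> R) : measurable_fun setT f -> measurable_fun setT h ->
  (forall u, 0 <= f u) -> (forall u, 0 <= h u) ->
  (\int[leb]_u (f u + h u)%:E = \int[leb]_u (f u)%:E + \int[leb]_u (h u)%:E)%E.
Proof.
move=> mf mh f0 h0.
under eq_integral do rewrite EFinD.
apply: ge0_integralD => //.
- by move=> u _; rewrite lee_fin.
- exact/measurable_EFinP.
- by move=> u _; rewrite lee_fin.
- exact/measurable_EFinP.
Qed.

Lemma intZ (c : R) (f : R -> R) : 0 <= c -> measurable_fun setT f ->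
  (forall u, 0 <= f u) ->
  (\int[leb]_u (c * f u)%:E = c%:E * \int[leb]_u (f u)%:E)%E.
Proof.
move=> c0 mf f0.
under eq_integral do rewrite EFinM.
apply: ge0_integralZl_EFin => //.
- by move=> u _; rewrite lee_fin.
- exact/measurable_EFinP.
Qed.

Lemma intle (f h : R -> R) : measurable_fun setT f -> measurable_fun setT h ->
  (forall u, 0 <= f u) -> (forall u, f u <= h u) ->
  (\int[leb]_u (f u)%:E <= \int[leb]_u (h u)%:E)%E.
Proof.
move=> mf mh f0 fh.
apply: ge0_le_integral => //.
- by move=> u _; rewrite lee_fin.
- exact/measurable_EFinP.
- exact/measurable_EFinP.
- by move=> u _; rewrite lee_fin.
Qed.

Lemma real_concl (a r q : R) : 0 <= a -> 0 <= r -> 0 <= q ->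
  (forall t, 0 < t -> a ^+ 2 + r <= q + a / t * r + a * t) ->
  (a - Num.sqrt r) ^+ 2 <= q.
Proof.
move=> a0 r0 q0 H.
have [rp|] := ltrP 0 r.
  have hp : 0 < Num.sqrt r by rewrite sqrtr_gt0.
  have e : a / Num.sqrt r * r = a * Num.sqrt r.
    by rewrite -{2}(sqr_sqrtr (ltW rp)) expr2 mulrA divfK ?gt_eqF.
  move: (H _ hp); rewrite e => H1.
  have hr := sqr_sqrtr (ltW rp).
  rewrite sqrrB hr; lra.
rewrite le_eqVlt ltNge r0 orbF => /eqP rr.
rewrite rr sqrtr0 subr0.
rewrite leNgt; apply/negP => qa.
have ap : 0 < a.
  rewrite lt_neqAle a0 andbT; apply/negP => /eqP a00.
  by move: qa; rewrite -a00 expr0n /= ltNge q0.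
have tp : 0 < (a ^+ 2 - q) / (2 * a) by rewrite divr_gt0 ?subr_gt0 // mulr_gt0.
have := H _ tp.
rewrite rr mulr0 !addr0.
have -> : a * ((a ^+ 2 - q) / (2 * a)) = (a ^+ 2 - q) / 2.
  by field; rewrite gt_eqF.
move=> H1; lra.
Qed.


Lemma pointwise_bound (k b : R -> R) (a : R) :
  measurable_fun setT k -> measurable_fun setT b ->
  (forall u, 0 <= k u) -> (forall u, 0 <= b u) -> 0 <= a ->
  (\int[leb]_u (k u)%:E = 1)%E ->
  (((a - Num.sqrt (fine (\int[leb]_u (k u * b u ^+ 2)%:E))) ^+ 2)%:E
    <= \int[leb]_u (k u * (a - b u) ^+ 2)%:E)%E.
Proof.
move=> mk mb k0 b0 a0 one.
have mkb2 : measurable_fun setT (fun u => k u * b u ^+ 2) by mfun.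
have mkab : measurable_fun setT (fun u => k u * (a - b u) ^+ 2) by mfun.
have kb20 u : 0 <= k u * b u ^+ 2 by rewrite mulr_ge0 ?sqr_ge0.
have kab0 u : 0 <= k u * (a - b u) ^+ 2 by rewrite mulr_ge0 ?sqr_ge0.
have Q0 : (0 <= \int[leb]_u (k u * (a - b u) ^+ 2)%:E)%E.
  by apply: integral_ge0 => u _; rewrite lee_fin.
have J0 : (0 <= \int[leb]_u (k u * b u ^+ 2)%:E)%E.
  by apply: integral_ge0 => u _; rewrite lee_fin.
move: Q0 J0.
case Qe : (\int[leb]_u (k u * (a - b u) ^+ 2)%:E)%E => [q| |] q0; last 2 first.
    by move=> _; rewrite leey.
  by rewrite leeNy_eq in q0.
rewrite lee_fin in q0.
case Je : (\int[leb]_u (k u * b u ^+ 2)%:E)%E => [r| |] r0; [| | by rewrite leeNy_eq in r0]; last first.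
  have : (\int[leb]_u (k u * b u ^+ 2)%:E <=
      \int[leb]_u (2 * (k u * (a - b u) ^+ 2) + (2 * a ^+ 2) * k u)%:E)%E.
    apply: intle => //; first by mfun.
    move=> u; rewrite -subr_ge0.
    have -> : 2 * (k u * (a - b u) ^+ 2) + 2 * a ^+ 2 * k u - k u * b u ^+ 2
      = k u * (2 * a - b u) ^+ 2 by ring.
    by rewrite mulr_ge0 ?sqr_ge0.
  rewrite intD; first last.
  - by move=> u; rewrite mulr_ge0 // mulr_ge0 // sqr_ge0.
  - by move=> u; rewrite mulr_ge0 // mulr_ge0.
  - by mfun.
  - by mfun.
  rewrite intZ // ?mulr_ge0 ?sqr_ge0 // intZ // ?mulr_ge0 ?sqr_ge0 //.
  rewrite Je Qe one -!EFinM -EFinD. by rewrite leye_eq.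
rewrite lee_fin in r0 => /=.
rewrite lee_fin; apply: real_concl => // t t0.
have : (\int[leb]_u (a ^+ 2 * k u + k u * b u ^+ 2)%:E <=
    \int[leb]_u (k u * (a - b u) ^+ 2 + (a / t) * (k u * b u ^+ 2) + (a * t) * k u)%:E)%E.
  apply: intle => //; first by mfun.
  - by mfun.
  - by move=> u; rewrite addr_ge0 // mulr_ge0 ?sqr_ge0.
  move=> u.
  have e : k u * (a - b u) ^+ 2 + a / t * (k u * b u ^+ 2) + a * t * k u
     - (a ^+ 2 * k u + k u * b u ^+ 2) = k u * (a / t) * (b u - t) ^+ 2.
    by field; rewrite gt_eqF.
  rewrite -subr_ge0 e; apply: mulr_ge0; last exact: sqr_ge0.
  by apply: mulr_ge0 => //; rewrite divr_ge0 // ltW.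
have ha : 0 <= a ^+ 2 by rewrite sqr_ge0.
have hat : 0 <= a / t by rewrite divr_ge0 // ltW.
have hat2 : 0 <= a * t by rewrite mulr_ge0 // ltW.
rewrite intD; try side.
rewrite intD; try side.
rewrite intD; try side.
rewrite intZ; try side.
rewrite intZ; try side.
rewrite intZ; try side.

rewrite Je Qe one. rewrite -!EFinM. rewrite -!EFinD. rewrite lee_fin !mulr1. by [].
Qed.
End T4.

Section T5.
Context (R : realType).
Local Notation leb := (@lebesgue_measure R).

Lemma integral_refl (x : R) (F : R -> R) : measurable_fun setT F ->
  (forall y, 0 <= F y) ->
  (\int[leb]_y (F y)%:E = \int[leb]_u (F (x - u))%:E)%E.
Proof.
move=> mF F0.
have h1 : (-1 : R) != 0 by rewrite oppr_eq0 oner_eq0.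
have h2 : measurable_fun setT (fun y => (F y)%:E) by exact/measurable_EFinP.
rewrite (@integral_affine R (-1) x (fun y => (F y)%:E) h1 h2); last first.
  by move=> y; rewrite lee_fin.
rewrite normrN1 mul1e; apply: eq_integral => u _.
by rewrite mulN1r addrC.
Qed.

Lemma sq_le (e : \bar R) (y : R) : (0 <= e)%E -> (e <= y%:E)%E ->
  (e ^+ 2 <= (y ^+ 2)%:E)%E.
Proof.
case: e => [r| |] //= r0 ry.
- rewrite lee_fin in r0; rewrite lee_fin in ry.
  rewrite -EFinM lee_fin -expr2; apply: lerXn2r => //; rewrite nnegrE //.
exact: le_trans ry.
Qed.

End T5.

Theorem lemma2 (R : realType) (s K phi : R -> R) :
  prob_density s -> prob_density K ->
  nondecreasing_on_pos phi -> concave_on_pos phi -> phi 0 = 0 ->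
  (forall eta : R, 0 <= eta -> (omega2 (fun x => Num.sqrt (s x)) eta <= (phi eta)%:E)%E) ->
  forall w : R, 0 < w ->
  (L2norm (fun x => (Num.sqrt (s x) - Num.sqrt (convol (Kw K w) s x))%R) ^+ 2
   <= 2%:E * (\int[@lebesgue_measure R]_x ((Num.max 1 (x ^+ 2)) * K x)%R%:E)
           * ((phi w) ^+ 2)%R%:E)%E.
Proof.
move=> [ms s0 ints] [mK K0 intK] ndphi cphi phi0 Hom w w0.
set g := fun x => Num.sqrt (s x).
have mg : measurable_fun setT g.
  exact: (measurableT_comp (continuous_measurable_fun (@sqrt_continuous R)) ms).
have g0 x : 0 <= g x by exact: sqrtr_ge0.
have gs x : g x ^+ 2 = s x by exact: sqr_sqrtr.
set kw := Kw K w.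
have mkw : measurable_fun setT kw.
  apply: measurable_funM; first exact: measurable_cst.
  apply: (measurableT_comp mK); apply: measurable_funM => //; exact: measurable_cst.
have kw0 y : 0 <= kw y by rewrite /kw /Kw mulr_ge0 // invr_ge0 ltW.
have w1 : w^-1 != 0 by rewrite invr_eq0 gt_eqF.
have intkw : (\int[lebesgue_measure]_u (kw u)%:E = 1)%E.
  rewrite /kw /Kw intZ; first last.
  - by move=> u.
  - apply: (measurableT_comp mK); apply: measurable_funM => //; exact: measurable_cst.
  - by rewrite invr_ge0 ltW.
  have mKE : measurable_fun setT (fun v => (K v)%:E) by exact/measurable_EFinP.
  rewrite -intK (@integral_affine R w^-1 0 (fun v => (K v)%:E) w1 mKE); last first.
    by move=> v; rewrite lee_fin.
  rewrite ger0_norm ?invr_ge0 ?(ltW w0) //; congr (_ * _)%E.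
  by apply: eq_integral => u _; rewrite addr0.
have phi_ge0 eta : 0 <= eta -> 0 <= phi eta.
  move=> eta0; rewrite -lee_fin; apply: (le_trans _ (Hom _ eta0)).
  rewrite /omega2.
  apply: (@le_trans _ _ (L2norm (fun x => g (x + 0) - g x))); first exact: Lnorm_ge0.
  apply: ereal_sup_ubound.
  by exists 0 => //=; rewrite normr0.
have mF2 : measurable_fun setT (fun p : R * R => (kw (p.1 - p.2) * s p.2)%:E).
  apply/measurable_EFinP; apply: measurable_funM.
    apply: (measurableT_comp mkw); apply: measurable_funB; [exact: measurable_fst | exact: measurable_snd].
  exact: (measurableT_comp ms measurable_snd).
have F20 p : (0 <= (kw (p.1 - p.2) * s p.2)%:E)%E by rewrite lee_fin mulr_ge0.
set c := convol kw s.
have mc : measurable_fun setT c.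
  have H := measurable_fun_fubini_tonelli_F (m2 := lebesgue_measure) _ mF2 F20.
  exact: (measurableT_comp (fine_measurable measurableT) H).
have mgx (x : R) : measurable_fun setT (fun u : R => g (x - u)).
  apply: (measurableT_comp mg); apply: measurable_funB; [exact: measurable_cst | exact: measurable_id].
have cE x : c x = fine (\int[lebesgue_measure]_u (kw u * g (x - u) ^+ 2)%:E).
  rewrite /c /convol /Rintegral (@integral_refl R x); first last.
  - by move=> y; rewrite mulr_ge0.
  - apply: measurable_funM; last exact: ms.
    apply: (measurableT_comp mkw); apply: measurable_funB; [exact: measurable_cst | exact: measurable_id].
  congr fine; apply: eq_integral => u _.
  by rewrite gs; congr (EFin (kw _ * _)); ring.
have pw x : (((g x - Num.sqrt (c x)) ^+ 2)%:E <=
    \int[lebesgue_measure]_u (kw u * (g x - g (x - u)) ^+ 2)%:E)%E.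
  by rewrite cE; apply: pointwise_bound.
set H := fun p : R * R => (kw p.2 * (g p.1 - g (p.1 - p.2)) ^+ 2)%:E.
have mH : measurable_fun setT H.
  apply/measurable_EFinP; apply: measurable_funM.
    exact: (measurableT_comp mkw measurable_snd).
  apply: measurable_funX; apply: measurable_funB.
    exact: (measurableT_comp mg measurable_fst).
  apply: (measurableT_comp mg); apply: measurable_funB; [exact: measurable_fst | exact: measurable_snd].
have H0 p : (0 <= H p)%E by rewrite lee_fin mulr_ge0 ?sqr_ge0.
rewrite L2norm_sqr.
apply: (@le_trans _ _ (\int[lebesgue_measure]_x \int[lebesgue_measure]_u H (x, u))%E).
  have f10 : forall x, [set: R] x -> (0 <= ((g x - Num.sqrt (c x)) ^+ 2)%:E)%E.
    by move=> x _; rewrite lee_fin sqr_ge0.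
  have mf1 : measurable_fun setT (fun x => ((g x - Num.sqrt (c x)) ^+ 2)%:E).
    apply/measurable_EFinP; apply: measurable_funX; apply: measurable_funB => //.
    exact: (measurableT_comp (continuous_measurable_fun (@sqrt_continuous R)) mc).
  have mf2 := measurable_fun_fubini_tonelli_F (m2 := lebesgue_measure) _ mH H0.
  apply: ge0_le_integral; [exact: measurableT | exact: f10 | exact: mf1 | exact: mf2 | move=> x _; exact: pw].
rewrite (fubini_tonelli (m1 := lebesgue_measure) (m2 := lebesgue_measure) H mH H0) /=.
set P := phi w ^+ 2.
have P0 : 0 <= P by rewrite sqr_ge0.
apply: (@le_trans _ _ (\int[lebesgue_measure]_u (kw u * (P * Num.max 1 ((w^-1 * u) ^+ 2)))%:E)%E).
  have f10 : forall u, [set: R] u -> (0 <= \int[lebesgue_measure]_x H (x, u))%E.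
    by move=> u _; apply: integral_ge0 => x _.
  have mf1 := measurable_fun_fubini_tonelli_G (m1 := lebesgue_measure) _ mH H0.
  have mf2 : measurable_fun setT (fun u => (kw u * (P * Num.max 1 ((w^-1 * u) ^+ 2)))%:E).
    apply/measurable_EFinP; mfun.
  apply: ge0_le_integral; [exact: measurableT | exact: f10 | exact: mf1 | exact: mf2 | ].
  move=> u _ /=.
  rewrite /H /= (@intZ R _ _ (kw0 u)); first last.
  - by move=> x; rewrite sqr_ge0.
  - apply: measurable_funX; apply: measurable_funB => //.
    apply: (measurableT_comp mg); apply: measurable_funB; [exact: measurable_id | exact: measurable_cst].
  have e : (\int[lebesgue_measure]_x ((g x - g (x - u)) ^+ 2)%:E =
      L2norm (fun x : R => (g (x + - u) - g x)%R) ^+ 2)%E.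
    by rewrite L2norm_sqr; apply: eq_integral => x _; rewrite -sqrrN opprB.
  rewrite e.
  apply: (@le_trans _ _ ((kw u)%:E * (P * Num.max 1 ((w^-1 * u) ^+ 2))%:E)%E); last by rewrite -EFinM.
  apply: lee_pmul; [by rewrite lee_fin | by rewrite expe_ge0 // Lnorm_ge0 | by [] | ].
  have pu : 0 <= phi `|u| by apply: phi_ge0.
  apply: (@le_trans _ _ ((phi `|u| ^+ 2)%:E)).
    apply: sq_le; first exact: Lnorm_ge0.
    apply: (le_trans _ (Hom _ (normr_ge0 u))).
    by apply: ereal_sup_ubound; exists (- u) => //=; rewrite normrN.
  by rewrite lee_fin; apply: phi_bound => //; apply: phi_ge0; rewrite ltW.
set Gf := fun v : R => P * (Num.max 1 (v ^+ 2) * K v).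
have mGf : measurable_fun setT Gf by rewrite /Gf; mfun.
have Gf0 v : 0 <= Gf v by rewrite /Gf mulr_ge0 // mulr_ge0 // le_max ler01.
have mGfw : measurable_fun setT (fun u : R => Gf (w^-1 * u)).
  apply: (measurableT_comp mGf); mfun.
have -> : (\int[lebesgue_measure]_u (kw u * (P * Num.max 1 ((w^-1 * u) ^+ 2)))%:E
    = \int[lebesgue_measure]_u (w^-1 * Gf (w^-1 * u))%:E)%E.
  by apply: eq_integral => u _; rewrite /kw /Kw /Gf; congr EFin; ring.
rewrite (@intZ R _ _ _ mGfw); first last.
- by move=> u.
- by rewrite invr_ge0 ltW.
have mGfE : measurable_fun setT (fun v => (Gf v)%:E) by exact/measurable_EFinP.
have -> : (\int[lebesgue_measure]_u (Gf (w^-1 * u))%:E = w%:E * \int[lebesgue_measure]_v (Gf v)%:E)%E.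
  rewrite (@integral_affine R w^-1 0 (fun v => (Gf v)%:E) w1 mGfE); last first.
    by move=> v; rewrite lee_fin.
  rewrite muleA -EFinM ger0_norm ?invr_ge0 ?(ltW w0) // mulfV ?gt_eqF // mul1e.
  by apply: eq_integral => u _; rewrite addr0.
rewrite muleA -EFinM mulVf ?gt_eqF // mul1e.
rewrite /Gf (@intZ R _ _ P0); first last.
- by move=> v; rewrite mulr_ge0 // le_max ler01.
- by mfun.
set I := (\int[lebesgue_measure]_x _)%E.
have I0 : (0 <= I)%E by apply: integral_ge0 => x _; rewrite lee_fin mulr_ge0 // le_max ler01.
rewrite muleC -muleA; apply: lee_pemull; first by rewrite mule_ge0 // lee_fin.
by rewrite lee_fin ler1n.
Qed.
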